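(* Under Condition ASM (see context), $\|\mathbb{E}_n[x_ir_i]\|_\infty\leqslant\min\{\sigma/\sqrt n,\ c_s\}$.
   Context: Condition ASM: observations $(y_i,z_i)$, $i=1,\dots,n$, $z_i$ fixed, $y_i=f(z_i)+\varepsilon_i$, $\varepsilon_i$ i.i.d. $N(0,\sigma^2)$, $\sigma>0$; $f_i=f(z_i)$, $\mathbb{E}_n[a_i]=n^{-1}\sum_ia_i$; $x_i=P(z_i)\in\mathbb{R}^p$ (including a constant) normalized so that $\mathbb{E}_n[x_{ij}^2]=1$ for each $j$. $\beta_0$ is any solution of $\min_{\beta\in\mathbb{R}^p}\mathbb{E}_n[(f_i-x_i'\beta)^2]+\sigma^2\|\beta\|_0/n$, with $\|\beta\|_0$ the number of nonzero entries; $s=\|\beta_0\|_0$; $r_i=f_i-x_i'\beta_0$; $c_s=\sqrt{\mathbb{E}_n[r_i^2]}$, and $c_s\leqslant K\sigma\sqrt{s/n}$ for an absolute constant $K$. *)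

(* Defs.v *)
From HB Require Import structures.
From mathcomp Require Import all_boot all_order all_algebra.
Set Implicit Arguments. Unset Strict Implicit. Unset Printing Implicit Defensive.
Import Order.TTheory GRing.Theory Num.Theory.
Local Open Scope ring_scope.

Definition En (R : fieldType) (n : nat) (a : 'I_n -> R) : R :=
  (\sum_(i < n) a i) / n%:R.

Definition dotp (R : fieldType) (p : nat) (u v : 'I_p -> R) : R :=
  \sum_(j < p) u j * v j.

Definition l0norm (R : fieldType) (p : nat) (b : 'I_p -> R) : nat :=
  #|[set j : 'I_p | b j != 0]|.

(* ||v||_inf (with the convention 0 for p = 0). *)
Definition linf (R : realDomainType) (p : nat) (v : 'I_p -> R) : R :=
  \big[Num.max/0]_(j < p) `|v j|.

Definition oracle_obj (R : fieldType) (n p : nat) (f : 'I_n -> R)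
    (x : 'I_n -> 'I_p -> R) (sigma : R) (b : 'I_p -> R) : R :=
  En (fun i => (f i - dotp (x i) b) ^+ 2) + sigma ^+ 2 * (l0norm b)%:R / n%:R.

(* Main.v *)
Require Import Defs.
From HB Require Import structures.
From mathcomp Require Import all_boot all_order all_algebra.
From mathcomp Require Import ring lra.
Import Order.TTheory GRing.Theory Num.Theory.
Local Open Scope ring_scope.

Lemma En_quad (R : fieldType) (n : nat) (r x : 'I_n -> R) (t : R) :
  En (fun i => (r i - t * x i) ^+ 2) =
  En (fun i => r i ^+ 2) - 2%:R * t * En (fun i => x i * r i)
  + t ^+ 2 * En (fun i => x i ^+ 2).
Proof.
rewrite /En.
have -> : \sum_(i < n) (r i - t * x i) ^+ 2 =
  \sum_(i < n) r i ^+ 2 - 2%:R * t * \sum_(i < n) (x i * r i)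
  + t ^+ 2 * \sum_(i < n) x i ^+ 2.
  rewrite !mulr_sumr -sumrN -!big_split /=; apply: eq_bigr => i _; ring.
ring.
Qed.

Lemma En_sq_ge0 (R : realFieldType) (n : nat) (a : 'I_n -> R) :
  0 <= En (fun i => a i ^+ 2).
Proof.
rewrite /En divr_ge0 // ?ler0n //; apply: sumr_ge0 => i _; exact: sqr_ge0.
Qed.

Theorem lemma6 (R : rcfType) (Z : Type) (n p : nat)
    (z : 'I_n -> Z) (fz : Z -> R) (P : Z -> 'I_p -> R) (sigma K : R)
    (beta0 : 'I_p -> R) :
  (0 < n)%N ->
  0 < sigma ->
  (* x_i includes a constant regressor *)
  (exists j0 : 'I_p, exists c : R, forall i : 'I_n, P (z i) j0 = c) ->
  (* normalization E_n[x_ij^2] = 1 *)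
  (forall j : 'I_p, En (fun i : 'I_n => P (z i) j ^+ 2) = 1) ->
  (* beta0 solves the oracle problem *)
  (forall b : 'I_p -> R,
      oracle_obj (fun i => fz (z i)) (fun i => P (z i)) sigma beta0
      <= oracle_obj (fun i => fz (z i)) (fun i => P (z i)) sigma b) ->
  (* c_s <= K sigma sqrt(s/n) *)
  Num.sqrt (En (fun i => (fz (z i) - dotp (P (z i)) beta0) ^+ 2))
    <= K * sigma * Num.sqrt ((l0norm beta0)%:R / n%:R) ->
  linf (fun j : 'I_p => En (fun i : 'I_n => P (z i) j * (fz (z i) - dotp (P (z i)) beta0)))
    <= Num.min (sigma / Num.sqrt n%:R)
               (Num.sqrt (En (fun i => (fz (z i) - dotp (P (z i)) beta0) ^+ 2))).
Proof.
move=> n0 sig0 _ Hnorm Hopt _.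
set r := fun i => fz (z i) - dotp (P (z i)) beta0.
set c2 := En (fun i => r i ^+ 2).
have n0R : 0 < n%:R :> R by rewrite ltr0n.
rewrite /linf; apply: bigmax_le => [|j _].
  by rewrite le_min divr_ge0 ?sqrtr_ge0 ?ltW.
set v := En _.
have Hq : forall t, En (fun i => (r i - t * P (z i) j) ^+ 2) = c2 - 2%:R * t * v + t ^+ 2.
  by move=> t; rewrite En_quad Hnorm mulr1.
have Hv : `|v| = Num.sqrt (v ^+ 2) by rewrite sqrtr_sqr.
rewrite le_min; apply/andP; split; last first.
  rewrite Hv ler_wsqrtr //.
  have := @En_sq_ge0 _ _ (fun i => r i - v * P (z i) j).
  rewrite Hq => H; rewrite -subr_ge0; apply: le_trans H _; rewrite le_eqVlt; apply/orP; left.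
  by apply/eqP; ring.
pose b := fun k => beta0 k + v * (k == j)%:R.
have Hdot : forall i, fz (z i) - dotp (P (z i)) b = r i - v * P (z i) j.
  move=> i; rewrite /r /dotp /b.
  under eq_bigr => k _ do rewrite mulrDr.
  rewrite big_split /=.
  have -> : \sum_(k < p) P (z i) k * (v * (k == j)%:R) = v * P (z i) j.
    rewrite (bigD1 j) //= big1 => [|k /negbTE ->]; last by rewrite mulr0 mulr0.
    rewrite eqxx /= addr0 mulr1; ring.
  ring.
have Hl0 : (l0norm b <= (l0norm beta0).+1)%N.
  rewrite /l0norm; apply: (@leq_trans #|j |: [set k | beta0 k != 0]|).
    apply: subset_leq_card; apply/subsetP => k; rewrite !inE /b.
    case: (eqVneq k j) => [->|_] /=; first by rewrite ?eqxx ?orbT.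
    by rewrite ?mulr0n ?mulr0 ?addr0.
  by rewrite cardsU1; case: (j \notin _).
have := Hopt b; rewrite /oracle_obj.
have -> : En (fun i => (fz (z i) - dotp (P (z i)) b) ^+ 2) = c2 - v ^+ 2.
  have E1 : En (fun i => (r i - v * P (z i) j) ^+ 2) = c2 - v ^+ 2 by rewrite Hq; ring.
  rewrite -E1 /En; congr (_ / _); apply: eq_bigr => i _; by rewrite Hdot.
rewrite -/r -/c2 => Hle.
have Hv2 : v ^+ 2 <= sigma ^+ 2 / n%:R.
  have H1 : sigma ^+ 2 * (l0norm b)%:R / n%:R <= sigma ^+ 2 * (l0norm beta0)%:R / n%:R + sigma ^+ 2 / n%:R.
    have Ha : 0 <= sigma ^+ 2 / n%:R by rewrite divr_ge0 ?sqr_ge0 ?ler0n.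
    have Hb : (l0norm b)%:R <= (l0norm beta0)%:R + 1 :> R by rewrite natr1 ler_nat.
    have E2 : forall L : R, sigma ^+ 2 * L / n%:R = L * (sigma ^+ 2 / n%:R) by move=> L; ring.
    rewrite !E2 -[X in _ + X]mul1r -mulrDl; exact: ler_wpM2r.
  lra.
rewrite Hv.
have -> : sigma / Num.sqrt n%:R = Num.sqrt (sigma ^+ 2 / n%:R).
  by rewrite sqrtrM ?sqr_ge0 // sqrtr_sqr gtr0_norm // sqrtrV ?ler0n.
exact: ler_wsqrtr.
Qed.
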